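(* There exists a decreasing sequence $(\kappa_n)_{n=1}^\infty\subset(0,1/2)$ with $\kappa_n\to0$ such that each $T_{\kappa_n}$ is Markov, and each $\kappa_n$ satisfies $(2+2\kappa_n)^n\kappa_n=1$. Writing $T=T_{\kappa_n}$, a Markov partition for $T$ is, for $n=1$, $\{(-1,-\tfrac12),(-\tfrac12,-\kappa_1),(-\kappa_1,0),(0,\kappa_1),(\kappa_1,\tfrac12),(\tfrac12,1)\}$, and for $n\geq2$ it consists of the intervals $(-1,T(-\kappa_n))$; $(T^i(-\kappa_n),T^{i+1}(-\kappa_n))$ for $1\le i\le n-2$; $(T^{n-1}(-\kappa_n),-\tfrac12)$, $(-\tfrac12,-\kappa_n)$, $(-\kappa_n,0)$, $(0,\kappa_n)$, $(\kappa_n,\tfrac12)$, $(\tfrac12,T^{n-1}(\kappa_n))$; $(T^{i+1}(\kappa_n),T^i(\kappa_n))$ for $1\le i\le n-2$; and $(T(\kappa_n),1)$.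
   Context: For $\kappa\in(0,1/2)$, the paired tent map $T_\kappa:[-1,1]\to[-1,1]$ is $T_\kappa(x)=2(1+\kappa)(x+1)-1$ for $x\in[-1,-1/2]$, $T_\kappa(x)=-2(1+\kappa)x-1$ for $x\in[-1/2,0)$, $T_\kappa(0)=0$, $T_\kappa(x)=-2(1+\kappa)x+1$ for $x\in(0,1/2]$, $T_\kappa(x)=2(1+\kappa)(x-1)+1$ for $x\in[1/2,1]$. A map $T$ of an interval $I$ is Markov if there is a finite collection $\{R_i\}_{i=1}^r$ of disjoint open intervals (a Markov partition) such that $I\setminus\bigcup_iR_i$ is exactly the set of endpoints of the $R_i$, and whenever $R_i\cap T(R_j)\neq\emptyset$, we have $R_i\subset T(R_j)$. *)

(* Defs.v *)
From Stdlib Require Import Reals Lra List.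
Import ListNotations.
Open Scope R_scope.

(** The paired tent map T_kappa, extended to all of R by the outer formulas
    (only its values on [-1,1] matter). Both formulas agree at -1/2 and 1/2. *)
Definition tentT (k x : R) : R :=
  if Rle_dec x (-1/2) then 2 * (1 + k) * (x + 1) - 1
  else if Rlt_dec x 0 then - 2 * (1 + k) * x - 1
  else if Req_EM_T x 0 then 0
  else if Rle_dec x (1/2) then - 2 * (1 + k) * x + 1
  else 2 * (1 + k) * (x - 1) + 1.

Definition iterT (k : R) (i : nat) (x : R) : R := Nat.iter i (tentT k) x.

Definition in_ival (J : R * R) (x : R) : Prop := fst J < x < snd J.

(** Markov partition of the interval [l,u] for T (as in the paper):
    a finite collection of disjoint (nonempty) open intervals, such that
    [l,u] minus their union is exactly the set of their endpoints, and
    whenever R_i meets T(R_j), R_i is contained in T(R_j). *)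
Definition is_Markov_partition (T : R -> R) (l u : R) (P : list (R * R)) : Prop :=
  (forall J, In J P -> fst J < snd J) /\
  (forall i j, (i < length P)%nat -> (j < length P)%nat -> i <> j ->
     forall x, ~ (in_ival (nth i P (0,0)) x /\ in_ival (nth j P (0,0)) x)) /\
  (forall x,
     (l <= x <= u /\ ~ (exists J, In J P /\ in_ival J x)) <->
     (exists J, In J P /\ (x = fst J \/ x = snd J))) /\
  (forall Ri Rj, In Ri P -> In Rj P ->
     (exists z, in_ival Rj z /\ in_ival Ri (T z)) ->
     (forall y, in_ival Ri y -> exists z, in_ival Rj z /\ T z = y)).

Definition is_Markov (T : R -> R) (l u : R) : Prop :=
  exists P : list (R * R), is_Markov_partition T l u P.

Definition paper_partition (n : nat) (k : R) : list (R * R) :=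
  if Nat.eqb n 1 then
    [(-1, -1/2); (-1/2, -k); (-k, 0); (0, k); (k, 1/2); (1/2, 1)]
  else
    [(-1, tentT k (-k))]
    ++ map (fun i => (iterT k i (-k), iterT k (i+1) (-k))) (seq 1 (n-2))
    ++ [(iterT k (n-1) (-k), -1/2); (-1/2, -k); (-k, 0); (0, k); (k, 1/2);
        (1/2, iterT k (n-1) k)]
    ++ map (fun i => (iterT k (i+1) k, iterT k i k)) (seq 1 (n-2))
    ++ [(tentT k k, 1)].

(* Main.v *)
Require Import Defs.
From Stdlib Require Import Reals List Lra Lia.
Import ListNotations.
Open Scope R_scope.

Lemma mono_lt (p : nat -> R) (M : nat) :
  (forall j, (j < M)%nat -> p j < p (S j)) ->
  forall i j, (i < j)%nat -> (j <= M)%nat -> p i < p j.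
Proof.
  intros H i j Hij. induction Hij as [|j Hij IH]; intros HjM.
  - apply H; lia.
  - apply Rlt_trans with (p j). apply IH; lia. apply H; lia.
Qed.

Lemma mono_le (p : nat -> R) (M : nat) :
  (forall j, (j < M)%nat -> p j < p (S j)) ->
  forall i j, (i <= j)%nat -> (j <= M)%nat -> p i <= p j.
Proof.
  intros H i j Hij HjM. destruct (Nat.eq_dec i j). subst; lra.
  left; apply (mono_lt p M H); lia.
Qed.

Lemma idx_lt (p : nat -> R) (M : nat) :
  (forall j, (j < M)%nat -> p j < p (S j)) ->
  forall i j, (i <= M)%nat -> (j <= M)%nat -> p i < p j -> (i < j)%nat.
Proof.
  intros H i j Hi Hj Hp. destruct (Nat.lt_ge_cases i j) as [|Hc]; auto.
  pose proof (mono_le p M H j i Hc Hi). lra.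
Qed.

Lemma locate (p : nat -> R) (N : nat) :
  (forall j, (j < N)%nat -> p j < p (S j)) ->
  forall x, p 0%nat <= x <= p N ->
  (exists k, (k < N)%nat /\ p k < x < p (S k)) \/ (exists j, (j <= N)%nat /\ x = p j).
Proof.
  induction N as [|N IH]; intros H x Hx.
  - right; exists 0%nat; split; [lia|lra].
  - destruct (Rle_lt_dec x (p N)) as [Hle|Hlt].
    + destruct (IH (fun j Hj => H j ltac:(lia)) x ltac:(lra)) as [[k [Hk1 Hk2]]|[j [Hj1 Hj2]]].
      * left; exists k; split; [lia|auto].
      * right; exists j; split; [lia|auto].
    + destruct (Req_dec x (p (S N))).
      * right; exists (S N); split; [lia|auto].
      * left; exists N; split; [lia|lra].
Qed.

Lemma generic (T : R -> R) (p : nat -> R) (M : nat) (L : list nat) l u :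
  (1 <= M)%nat -> p 0%nat = l -> p M = u ->
  (forall j, (j < M)%nat -> p j < p (S j)) ->
  NoDup L -> (forall j, In j L <-> (j < M)%nat) ->
  (forall j, (j < M)%nat -> exists a b, a <> 0 /\
      (forall z, p j < z < p (S j) -> T z = a*z+b) /\
      (exists r, (r <= M)%nat /\ p r = a * p j + b) /\
      (exists s, (s <= M)%nat /\ p s = a * p (S j) + b)) ->
  is_Markov_partition T l u (map (fun j => (p j, p (S j))) L).
Proof.
  intros HM Hl Hu Hst HND HL HA. subst l u.
  pose proof (mono_lt p M Hst) as Mlt.
  pose proof (mono_le p M Hst) as Mle.
  pose proof (idx_lt p M Hst) as Idx.
  assert (HinP : forall J, In J (map (fun j => (p j, p (S j))) L) <->
             exists j, (j < M)%nat /\ J = (p j, p (S j))).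
  { intro J; rewrite in_map_iff; split.
    - intros [j [<- Hj]]; exists j; split; auto; apply HL; auto.
    - intros [j [Hj ->]]; exists j; split; auto; apply HL; auto. }
  unfold is_Markov_partition; split; [|split; [|split]].
  - intros J HJ. apply HinP in HJ. destruct HJ as [j [Hj ->]]. simpl. apply Hst; auto.
  - intros i j Hi Hj Hij x [H1 H2].
    rewrite length_map in Hi, Hj.
    rewrite (nth_indep _ (0,0) (p 0%nat, p 1%nat)) in H1 by (rewrite length_map; auto).
    rewrite (nth_indep _ (0,0) (p 0%nat, p 1%nat)) in H2 by (rewrite length_map; auto).
    change (p 0%nat, p 1%nat) with ((fun j => (p j, p (S j))) 0%nat) in H1, H2.
    rewrite map_nth in H1, H2.
    assert (Ha : (nth i L 0 < M)%nat) by (apply HL; apply nth_In; auto).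
    assert (Hb : (nth j L 0 < M)%nat) by (apply HL; apply nth_In; auto).
    unfold in_ival in H1, H2; simpl in H1, H2.
    assert (nth i L 0%nat = nth j L 0%nat).
    { assert (A1 : (nth i L 0 < S (nth j L 0))%nat) by (apply Idx; try lia; lra).
      assert (A2 : (nth j L 0 < S (nth i L 0))%nat) by (apply Idx; try lia; lra).
      lia. }
    apply Hij. eapply (proj1 (NoDup_nth L 0%nat)); eauto.
  - intros x; split.
    + intros [Hx Hn].
      destruct (locate p M Hst x Hx) as [[k [Hk1 Hk2]]|[j [Hj1 Hj2]]].
      * exfalso; apply Hn. exists (p k, p (S k)); split.
        apply HinP; exists k; auto. exact Hk2.
      * destruct (Nat.eq_dec j M).
        -- subst j. exists (p (M-1)%nat, p (S (M-1))); split.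
           apply HinP; exists (M-1)%nat; split; auto; lia.
           right; simpl. replace (S (M-1)) with M by lia; auto.
        -- exists (p j, p (S j)); split. apply HinP; exists j; split; auto; lia.
           left; auto.
    + intros [J [HJ Hx]]. apply HinP in HJ. destruct HJ as [j [Hj ->]].
      assert (exists i, (i <= M)%nat /\ x = p i) as [i [Hi ->]].
      { simpl in Hx; destruct Hx as [->| ->]; [exists j|exists (S j)]; split; auto; lia. }
      split.
      * split; apply Mle; lia.
      * intros [J [HJ HJx]]. apply HinP in HJ. destruct HJ as [k [Hk ->]].
        unfold in_ival in HJx; simpl in HJx.
        assert (k < i)%nat by (apply Idx; try lia; lra).
        assert (i < S k)%nat by (apply Idx; try lia; lra). lia.
  - intros Ri Rj HRi HRj [z [Hz HTz]] y Hy.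
    apply HinP in HRi; destruct HRi as [m [Hm ->]].
    apply HinP in HRj; destruct HRj as [j [Hj ->]].
    unfold in_ival in *; simpl in *.
    destruct (HA j Hj) as [a [b [Ha [Haff [[r [Hr Hpr]] [s [Hs Hps]]]]]]].
    rewrite (Haff z Hz) in HTz.
    assert (Hpj := Hst j Hj).
    destruct (Rlt_or_le 0 a) as [Hap|Han].
    +
      assert (p r < a*z+b < p s) by (rewrite Hpr, Hps; split; nra).
      assert (r < S m)%nat by (apply Idx; try lia; lra).
      assert (m < s)%nat by (apply Idx; try lia; lra).
      assert (p r <= p m) by (apply Mle; lia).
      assert (p (S m) <= p s) by (apply Mle; lia).
      exists ((y - b)/a). assert (Hz' : p j < (y-b)/a < p (S j)).
      { split; apply (Rmult_lt_reg_r a); auto; unfold Rdiv; rewrite Rmult_assoc, Rinv_l by lra; nra. }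
      split; auto. rewrite (Haff _ Hz'). field; lra.
    + assert (Han' : a < 0) by (destruct Han; auto; contradiction).
      assert (p s < a*z+b < p r) by (rewrite Hpr, Hps; split; nra).
      assert (s < S m)%nat by (apply Idx; try lia; lra).
      assert (m < r)%nat by (apply Idx; try lia; lra).
      assert (p s <= p m) by (apply Mle; lia).
      assert (p (S m) <= p r) by (apply Mle; lia).
      exists ((y - b)/a). assert (Hz' : p j < (y-b)/a < p (S j)).
      { assert (Hna : 0 < -a) by lra.
        replace ((y-b)/a) with ((b-y)/(-a)) by (field; lra).
        split; apply (Rmult_lt_reg_r (-a)); auto; unfold Rdiv; rewrite Rmult_assoc, Rinv_l by lra; nra. }
      split; auto. rewrite (Haff _ Hz'). field; lra.
Qed.

Lemma tent_L1 k x : x <= -1/2 -> tentT k x = (2+2*k)*x + ((2+2*k) - 1).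
Proof. intros H; unfold tentT; destruct (Rle_dec x (-1/2)); [ring|lra]. Qed.
Lemma tent_L2 k x : -1/2 < x < 0 -> tentT k x = (-(2+2*k))*x + (-1).
Proof. intros H; unfold tentT; destruct (Rle_dec x (-1/2)); [lra|].
  destruct (Rlt_dec x 0); [ring|lra]. Qed.
Lemma tent_R1 k x : 0 < x <= 1/2 -> tentT k x = (-(2+2*k))*x + 1.
Proof. intros H; unfold tentT; destruct (Rle_dec x (-1/2)); [lra|].
  destruct (Rlt_dec x 0); [lra|]. destruct (Req_EM_T x 0); [lra|].
  destruct (Rle_dec x (1/2)); [ring|lra]. Qed.
Lemma tent_R2 k x : 1/2 < x -> tentT k x = (2+2*k)*x + (1 - (2+2*k)).
Proof. intros H; unfold tentT; destruct (Rle_dec x (-1/2)); [lra|].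
  destruct (Rlt_dec x 0); [lra|]. destruct (Req_EM_T x 0); [lra|].
  destruct (Rle_dec x (1/2)); [lra|ring]. Qed.

Definition pp (n : nat) (k : R) (j : nat) : R :=
  if (j =? 0)%nat then -1
  else if (j <? n)%nat then -1 + k * (2+2*k)^j
  else if (j =? n)%nat then -1/2
  else if (j =? n+1)%nat then -k
  else if (j =? n+2)%nat then 0
  else if (j =? n+3)%nat then k
  else if (j =? n+4)%nat then 1/2
  else if (j <? 2*n+4)%nat then 1 - k * (2+2*k)^(2*n+4-j)
  else 1.

Ltac pev := unfold pp; repeat lazymatch goal with
 | |- (if (?a =? ?b)%nat then _ else _) = _ =>
     destruct (Nat.eqb_spec a b); [try lia | try lia]; cbv beta iota
 | |- (if (?a <? ?b)%nat then _ else _) = _ =>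
     destruct (Nat.ltb_spec a b); [try lia | try lia]; cbv beta iota
 end; try reflexivity.

Lemma pp_0 n k j : j = 0%nat -> pp n k j = -1.
Proof. intros; pev. Qed.
Lemma pp_lo n k j e : (1 <= j)%nat -> (j < n)%nat -> e = j -> pp n k j = -1 + k*(2+2*k)^e.
Proof. intros; subst; pev. Qed.
Lemma pp_n n k j : (1 <= n)%nat -> j = n -> pp n k j = -1/2.
Proof. intros; pev. Qed.
Lemma pp_n1 n k j : (1 <= n)%nat -> j = (n+1)%nat -> pp n k j = -k.
Proof. intros; pev. Qed.
Lemma pp_n2 n k j : (1 <= n)%nat -> j = (n+2)%nat -> pp n k j = 0.
Proof. intros; pev. Qed.
Lemma pp_n3 n k j : (1 <= n)%nat -> j = (n+3)%nat -> pp n k j = k.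
Proof. intros; pev. Qed.
Lemma pp_n4 n k j : (1 <= n)%nat -> j = (n+4)%nat -> pp n k j = 1/2.
Proof. intros; pev. Qed.
Lemma pp_hi n k j e : (n+5 <= j)%nat -> (j < 2*n+4)%nat -> e = (2*n+4-j)%nat ->
  pp n k j = 1 - k*(2+2*k)^e.
Proof. intros; subst; pev. Qed.
Lemma pp_M n k j : (1 <= n)%nat -> (2*n+4 <= j)%nat -> pp n k j = 1.
Proof. intros; pev. Qed.

Lemma small n k i : (1 <= n)%nat -> 0 < k < 1/2 -> (2+2*k)^n * k = 1 ->
  (i < n)%nat -> 0 < k*(2+2*k)^i < 1/2.
Proof.
  intros Hn Hk Heq Hi.
  assert (H1 : (2+2*k)^i <= (2+2*k)^(n-1)) by (apply Rle_pow; [lra|lia]).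
  replace n with (S (n-1)) in Heq by lia. simpl in Heq.
  assert (0 < (2+2*k)^i) by (apply pow_lt; lra).
  assert (0 < (2+2*k)^(n-1)) by (apply pow_lt; lra).
  split; [nra|]. nra.
Qed.

Lemma pp_step n k : (1 <= n)%nat -> 0 < k < 1/2 -> (2+2*k)^n * k = 1 ->
  forall j, (j < 2*n+4)%nat -> pp n k j < pp n k (S j).
Proof.
  intros Hn Hk Heq j Hj.
  assert (C : j = 0%nat \/ (1 <= j /\ S j < n)%nat \/ (1 <= j /\ S j = n)%nat \/
     j = n \/ j = (n+1)%nat \/ j = (n+2)%nat \/ j = (n+3)%nat \/ j = (n+4)%nat \/
     (n+5 <= j /\ S j < 2*n+4)%nat \/ (j = 2*n+3 /\ 2 <= n)%nat) by lia.
  destruct C as [C|[C|[C|[C|[C|[C|[C|[C|[C|C]]]]]]]]].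
  - rewrite (pp_0 n k j) by lia. destruct (Nat.eq_dec n 1).
    + rewrite (pp_n n k (S j)) by lia. lra.
    + rewrite (pp_lo n k (S j) (S j)) by lia. pose proof (small n k (S j) Hn Hk Heq ltac:(lia)). lra.
  - rewrite (pp_lo n k j j) by lia. rewrite (pp_lo n k (S j) (S j)) by lia.
    simpl. pose proof (small n k j Hn Hk Heq ltac:(lia)). nra.
  - rewrite (pp_lo n k j j) by lia. rewrite (pp_n n k (S j)) by lia.
    pose proof (small n k j Hn Hk Heq ltac:(lia)). lra.
  - rewrite (pp_n n k j), (pp_n1 n k (S j)) by lia. lra.
  - rewrite (pp_n1 n k j), (pp_n2 n k (S j)) by lia. lra.
  - rewrite (pp_n2 n k j), (pp_n3 n k (S j)) by lia. lra.
  - rewrite (pp_n3 n k j), (pp_n4 n k (S j)) by lia. lra.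
  - rewrite (pp_n4 n k j) by lia. destruct (Nat.eq_dec n 1).
    + rewrite (pp_M n k (S j)) by lia. lra.
    + rewrite (pp_hi n k (S j) (n-1)) by lia. pose proof (small n k (n-1) Hn Hk Heq ltac:(lia)). lra.
  - rewrite (pp_hi n k j (S (2*n+4 - S j))) by lia. rewrite (pp_hi n k (S j) (2*n+4 - S j)) by lia.
    set (e := (2*n+4 - S j)%nat) in *. simpl. pose proof (small n k e Hn Hk Heq ltac:(lia)). assert (1 < 2+2*k) by lra. nra.
  - rewrite (pp_hi n k j 1) by lia. rewrite (pp_M n k (S j)) by lia. simpl. nra.
Qed.

Definition inS n k x := exists r, (r <= 2*n+4)%nat /\ pp n k r = x.

Lemma ptL n k i : (1 <= n)%nat -> 0 < k < 1/2 -> (2+2*k)^n * k = 1 -> (i <= n)%nat ->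
  inS n k ((2+2*k) * pp n k i + ((2+2*k) - 1)).
Proof.
  intros Hn Hk Heq Hi.
  assert (C : i = 0%nat \/ (1 <= i /\ S i < n)%nat \/ (1 <= i /\ S i = n)%nat \/ i = n) by lia.
  destruct C as [C|[C|[C|C]]].
  - exists 0%nat; split; [lia|]. rewrite (pp_0 n k i), (pp_0 n k 0) by lia. ring.
  - exists (S i); split; [lia|]. rewrite (pp_lo n k i i), (pp_lo n k (S i) (S i)) by lia. simpl; ring.
  - exists (n+2)%nat; split; [lia|]. rewrite (pp_lo n k i i), (pp_n2 n k (n+2)) by lia.
    destruct C as [_ C]; rewrite <- C in Heq. simpl in Heq. nra.
  - exists (n+3)%nat; split; [lia|]. rewrite (pp_n n k i), (pp_n3 n k (n+3)) by lia. field.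
Qed.

Lemma ptM1 n k i : (1 <= n)%nat -> 0 < k < 1/2 -> (2+2*k)^n * k = 1 -> (n <= i <= n+2)%nat ->
  inS n k ((-(2+2*k)) * pp n k i + (-1)).
Proof.
  intros Hn Hk Heq Hi.
  assert (C : i = n \/ i = (n+1)%nat \/ i = (n+2)%nat) by lia.
  destruct C as [C|[C|C]].
  - exists (n+3)%nat; split; [lia|]. rewrite (pp_n n k i), (pp_n3 n k (n+3)) by lia. field.
  - rewrite (pp_n1 n k i) by lia. destruct (Nat.eq_dec n 1).
    + exists (n+2)%nat; split; [lia|]. rewrite (pp_n2 n k (n+2)) by lia. subst n. simpl in Heq. nra.
    + exists 1%nat; split; [lia|]. rewrite (pp_lo n k 1 1) by lia. simpl; ring.
  - exists 0%nat; split; [lia|]. rewrite (pp_n2 n k i), (pp_0 n k 0) by lia. ring.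
Qed.

Lemma ptM2 n k i : (1 <= n)%nat -> 0 < k < 1/2 -> (2+2*k)^n * k = 1 -> (n+2 <= i <= n+4)%nat ->
  inS n k ((-(2+2*k)) * pp n k i + 1).
Proof.
  intros Hn Hk Heq Hi.
  assert (C : i = (n+2)%nat \/ i = (n+3)%nat \/ i = (n+4)%nat) by lia.
  destruct C as [C|[C|C]].
  - exists (2*n+4)%nat; split; [lia|]. rewrite (pp_n2 n k i), (pp_M n k (2*n+4)) by lia. ring.
  - rewrite (pp_n3 n k i) by lia. destruct (Nat.eq_dec n 1).
    + exists (n+2)%nat; split; [lia|]. rewrite (pp_n2 n k (n+2)) by lia. subst n. simpl in Heq. nra.
    + exists (2*n+3)%nat; split; [lia|]. rewrite (pp_hi n k (2*n+3) 1) by lia. simpl; ring.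
  - exists (n+1)%nat; split; [lia|]. rewrite (pp_n4 n k i), (pp_n1 n k (n+1)) by lia. field.
Qed.

Lemma ptR n k i : (1 <= n)%nat -> 0 < k < 1/2 -> (2+2*k)^n * k = 1 -> (n+4 <= i <= 2*n+4)%nat ->
  inS n k ((2+2*k) * pp n k i + (1 - (2+2*k))).
Proof.
  intros Hn Hk Heq Hi.
  assert (C : i = (n+4)%nat \/ (n+5 <= i < 2*n+4 /\ S (2*n+4-i) < n)%nat \/
              (n+5 <= i < 2*n+4 /\ S (2*n+4-i) = n)%nat \/ i = (2*n+4)%nat) by lia.
  destruct C as [C|[C|[C|C]]].
  - exists (n+1)%nat; split; [lia|]. rewrite (pp_n4 n k i), (pp_n1 n k (n+1)) by lia. field.
  - exists (i-1)%nat; split; [lia|].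
    rewrite (pp_hi n k i (2*n+4-i)), (pp_hi n k (i-1) (S (2*n+4-i))) by lia. simpl; ring.
  - exists (n+2)%nat; split; [lia|].
    rewrite (pp_hi n k i (2*n+4-i)), (pp_n2 n k (n+2)) by lia.
    destruct C as [_ C]. set (e := (2*n+4-i)%nat) in *. rewrite <- C in Heq. simpl in Heq. nra.
  - exists (2*n+4)%nat; split; [lia|]. rewrite (pp_M n k i), (pp_M n k (2*n+4)) by lia. ring.
Qed.

Lemma pp_aff n k : (1 <= n)%nat -> 0 < k < 1/2 -> (2+2*k)^n * k = 1 ->
  forall j, (j < 2*n+4)%nat -> exists a b, a <> 0 /\
      (forall z, pp n k j < z < pp n k (S j) -> tentT k z = a*z+b) /\
      (exists r, (r <= 2*n+4)%nat /\ pp n k r = a * pp n k j + b) /\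
      (exists s, (s <= 2*n+4)%nat /\ pp n k s = a * pp n k (S j) + b).
Proof.
  intros Hn Hk Heq j Hj.
  pose proof (mono_le (pp n k) (2*n+4) (pp_step n k Hn Hk Heq)) as Mle.
  assert (C : (j < n)%nat \/ (n <= j <= n+1)%nat \/ (n+2 <= j <= n+3)%nat \/ (n+4 <= j)%nat) by lia.
  destruct C as [C|[C|[C|C]]].
  - exists (2+2*k), ((2+2*k)-1); split; [lra|split; [|split]].
    + intros z Hz. apply tent_L1. pose proof (Mle (S j) n ltac:(lia) ltac:(lia)).
      rewrite (pp_n n k n) in H by lia. lra.
    + apply ptL; auto; lia.
    + apply ptL; auto; lia.
  - exists (-(2+2*k)), (-1); split; [lra|split; [|split]].
    + intros z Hz. apply tent_L2. pose proof (Mle (S j) (n+2)%nat ltac:(lia) ltac:(lia)).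
      pose proof (Mle n j ltac:(lia) ltac:(lia)).
      rewrite (pp_n n k n) in H0 by lia. rewrite (pp_n2 n k (n+2)) in H by lia. lra.
    + apply ptM1; auto; lia.
    + apply ptM1; auto; lia.
  - exists (-(2+2*k)), 1; split; [lra|split; [|split]].
    + intros z Hz. apply tent_R1. pose proof (Mle (S j) (n+4)%nat ltac:(lia) ltac:(lia)).
      pose proof (Mle (n+2)%nat j ltac:(lia) ltac:(lia)).
      rewrite (pp_n2 n k (n+2)) in H0 by lia. rewrite (pp_n4 n k (n+4)) in H by lia. lra.
    + apply ptM2; auto; lia.
    + apply ptM2; auto; lia.
  - exists (2+2*k), (1-(2+2*k)); split; [lra|split; [|split]].
    + intros z Hz. apply tent_R2.
      pose proof (Mle (n+4)%nat j ltac:(lia) ltac:(lia)).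
      rewrite (pp_n4 n k (n+4)) in H by lia. lra.
    + apply ptR; auto; lia.
    + apply ptR; auto; lia.
Qed.

Definition LL (n : nat) : list nat :=
  if Nat.eqb n 1 then seq 0 6 else
  [0%nat] ++ seq 1 (n-2) ++ [(n-1)%nat; n; (n+1)%nat; (n+2)%nat; (n+3)%nat; (n+4)%nat]
  ++ map (fun i => (2*n+3-i)%nat) (seq 1 (n-2)) ++ [(2*n+3)%nat].

Lemma LL_in n j : (1 <= n)%nat -> In j (LL n) <-> (j < 2*n+4)%nat.
Proof.
  intros Hn. unfold LL. destruct (Nat.eqb_spec n 1).
  - subst. rewrite in_seq. lia.
  - rewrite !in_app_iff, in_map_iff, !in_seq. simpl. split.
    + intros H. repeat match goal with
      | H : _ \/ _ |- _ => destruct H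
      | H : exists x, _ |- _ => destruct H
      | H : _ /\ _ |- _ => destruct H
      | H : In _ (seq _ _) |- _ => apply in_seq in H
      end; try lia.
    + intros H.
      assert (C : j = 0%nat \/ (1 <= j <= n-2)%nat \/ (n-1 <= j <= n+4)%nat \/
                  (n+5 <= j <= 2*n+2)%nat \/ j = (2*n+3)%nat) by lia.
      destruct C as [C|[C|[C|[C|C]]]].
      * left; lia.
      * right; left; lia.
      * right; right; left; lia.

      * right; right; right; left. exists (2*n+3-j)%nat. rewrite in_seq. lia.
      * right; right; right; right; left; lia.
Qed.

Lemma LL_nodup n : (1 <= n)%nat -> NoDup (LL n).
Proof.
  intros Hn. apply (NoDup_incl_NoDup (l:=seq 0 (2*n+4))).
  - apply seq_NoDup.
  - rewrite length_seq. unfold LL. destruct (Nat.eqb_spec n 1).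
    + subst; simpl; lia.
    + rewrite !length_app, length_map, !length_seq. simpl. lia.
  - intros j Hj. apply in_seq in Hj. apply LL_in; auto; lia.
Qed.

Lemma iter_neg n k : (1 <= n)%nat -> 0 < k < 1/2 -> (2+2*k)^n * k = 1 ->
  forall i, (1 <= i)%nat -> (i < n)%nat -> iterT k i (-k) = -1 + k*(2+2*k)^i.
Proof.
  intros Hn Hk Heq i. induction i as [|i IH]; intros H1 H2; [lia|].
  unfold iterT; simpl Nat.iter. fold (iterT k i (-k)).
  destruct (Nat.eq_dec i 0).
  - subst. simpl. rewrite tent_L2 by lra. ring.
  - rewrite IH by lia. rewrite tent_L1.
    + simpl; ring.
    + pose proof (small n k i Hn Hk Heq ltac:(lia)). lra.
Qed.

Lemma iter_pos n k : (1 <= n)%nat -> 0 < k < 1/2 -> (2+2*k)^n * k = 1 ->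
  forall i, (1 <= i)%nat -> (i < n)%nat -> iterT k i k = 1 - k*(2+2*k)^i.
Proof.
  intros Hn Hk Heq i. induction i as [|i IH]; intros H1 H2; [lia|].
  unfold iterT; simpl Nat.iter. fold (iterT k i k).
  destruct (Nat.eq_dec i 0).
  - subst. simpl. rewrite tent_R1 by lra. ring.
  - rewrite IH by lia. rewrite tent_R2.
    + simpl; ring.
    + pose proof (small n k i Hn Hk Heq ltac:(lia)). lra.
Qed.

Lemma paper_eq n k : (1 <= n)%nat -> 0 < k < 1/2 -> (2+2*k)^n * k = 1 ->
  paper_partition n k = map (fun j => (pp n k j, pp n k (S j))) (LL n).
Proof.
  intros Hn Hk Heq. unfold paper_partition, LL. destruct (Nat.eqb_spec n 1).
  - subst n. simpl.
    rewrite (pp_0 1 k 0), (pp_n 1 k 1), (pp_n1 1 k 2), (pp_n2 1 k 3), (pp_n3 1 k 4),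
      (pp_n4 1 k 5), (pp_M 1 k 6) by lia. reflexivity.
  - rewrite !map_app, map_map. f_equal; [|f_equal; [|f_equal; [|f_equal]]].
    + simpl. rewrite (pp_0 n k 0), (pp_lo n k 1 1) by lia.
      change (tentT k (-k)) with (iterT k 1 (-k)). rewrite (iter_neg n k) by (auto; lia). reflexivity.
    + apply map_ext_in. intros i Hi. apply in_seq in Hi.
      rewrite (iter_neg n k Hn Hk Heq i), (iter_neg n k Hn Hk Heq (i+1)) by (auto; lia).
      rewrite (pp_lo n k i i), (pp_lo n k (S i) (i+1)) by lia. reflexivity.
    + simpl.
      rewrite (iter_neg n k Hn Hk Heq (n-1)), (iter_pos n k Hn Hk Heq (n-1)) by (auto; lia).
      rewrite (pp_lo n k (n-1) (n-1)), (pp_n n k (S (n-1))), (pp_n n k n), (pp_n1 n k (S n)),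
        (pp_n1 n k (n+1)), (pp_n2 n k (S (n+1))), (pp_n2 n k (n+2)), (pp_n3 n k (S (n+2))),
        (pp_n3 n k (n+3)), (pp_n4 n k (S (n+3))), (pp_n4 n k (n+4)),
        (pp_hi n k (S (n+4)) (n-1)) by lia. reflexivity.
    + apply map_ext_in. intros i Hi. apply in_seq in Hi.
      rewrite (iter_pos n k Hn Hk Heq i), (iter_pos n k Hn Hk Heq (i+1)) by (auto; lia).
      rewrite (pp_hi n k (2*n+3-i) (i+1)), (pp_hi n k (S (2*n+3-i)) i) by lia. reflexivity.
    + cbn [map]. rewrite (pp_hi n k (2*n+3) 1), (pp_M n k (S (2*n+3))) by lia.
      change (tentT k k) with (iterT k 1 k). rewrite (iter_pos n k) by (auto; lia). reflexivity.
Qed.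

Lemma markov_n n k : (1 <= n)%nat -> 0 < k < 1/2 -> (2+2*k)^n * k = 1 ->
  is_Markov_partition (tentT k) (-1) 1 (paper_partition n k).
Proof.
  intros Hn Hk Heq. rewrite paper_eq by auto.
  apply (generic (tentT k) (pp n k) (2*n+4) (LL n)).
  - lia.
  - apply pp_0; lia.
  - apply pp_M; lia.
  - apply pp_step; auto.
  - apply LL_nodup; auto.
  - intros; apply LL_in; auto.
  - apply pp_aff; auto.
Qed.

Definition fm (m : nat) (x : R) : R := (2+2*x)^(S m) * x - 1.

Lemma fm_cont m : continuity (fm m).
Proof. unfold fm. reg. Qed.

Lemma fm_0 m : fm m 0 < 0.
Proof. unfold fm. rewrite Rmult_0_r. lra. Qed.

Lemma fm_half m : 0 < fm m (1/2).
Proof. unfold fm. replace (2+2*(1/2)) with 3 by field.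
  assert (1 <= 3^m) by (apply pow_R1_Rle; lra). simpl. lra. Qed.

Definition root (m : nat) : {z : R | 0 <= z <= 1/2 /\ fm m z = 0} :=
  IVT (fm m) 0 (1/2) (fm_cont m) ltac:(lra) (fm_0 m) (fm_half m).

Definition kap (n : nat) : R := proj1_sig (root (pred n)).

Lemma kap_prop n : (1 <= n)%nat -> 0 < kap n < 1/2 /\ (2 + 2 * kap n)^n * kap n = 1.
Proof.
  intros Hn. unfold kap. destruct (root (pred n)) as [z [Hz Hf]]. simpl.
  replace n with (S (pred n)) by lia.
  pose proof (fm_0 (pred n)). pose proof (fm_half (pred n)).
  unfold fm in Hf. split; [|lra].
  split.
  - destruct (Req_dec z 0); [|lra]. subst z. unfold fm in H. lra.
  - destruct (Req_dec z (1/2)); [|lra]. subst z. unfold fm in H0. lra.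
Qed.

Theorem lemma4 :
  exists kappa : nat -> R,
    (forall n : nat, (1 <= n)%nat -> 0 < kappa n < 1/2) /\
    (forall n : nat, (1 <= n)%nat -> kappa (S n) < kappa n) /\
    Un_cv kappa 0 /\
    (forall n : nat, (1 <= n)%nat ->
       is_Markov (tentT (kappa n)) (-1) 1 /\
       (2 + 2 * kappa n) ^ n * kappa n = 1 /\
       is_Markov_partition (tentT (kappa n)) (-1) 1 (paper_partition n (kappa n))).
Proof.
  exists kap. split; [|split; [|split]].
  - intros n Hn; apply kap_prop; auto.
  - intros n Hn. destruct (kap_prop n Hn) as [[H1 H2] H3].
    destruct (kap_prop (S n) ltac:(lia)) as [[H4 H5] H6].
    destruct (Rlt_or_le (kap (S n)) (kap n)) as [|Hc]; auto. exfalso.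
    assert ((2+2*kap n)^n <= (2+2*kap (S n))^n) by (apply pow_incr; lra).
    assert (0 < (2+2*kap n)^n) by (apply pow_lt; lra).
    simpl in H6. nra.
  - intros eps Heps.
    destruct (pow_lt_1_zero (1/2) ltac:(rewrite Rabs_pos_eq; lra) eps Heps) as [N HN].
    exists (Nat.max N 1). intros n Hn. unfold R_dist. rewrite Rminus_0_r.
    destruct (kap_prop n ltac:(lia)) as [[H1 H2] H3].
    rewrite Rabs_pos_eq by lra.
    assert (A : 2^n <= (2+2*kap n)^n) by (apply pow_incr; lra).
    assert (B : (1/2)^n * 2^n = 1) by (rewrite <- Rpow_mult_distr; replace (1/2*2) with 1 by field; apply pow1).
    assert (C : 0 < (1/2)^n) by (apply pow_lt; lra).
    assert (D := HN n ltac:(lia)). rewrite Rabs_pos_eq in D by lra.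
    assert (E : 2^n * kap n <= 1) by nra. assert (kap n = (1/2)^n * (2^n * kap n)) by (rewrite <- Rmult_assoc, B; ring). assert (kap n <= (1/2)^n) by nra. lra.
  - intros n Hn. destruct (kap_prop n Hn) as [Hk Heq].
    assert (HM := markov_n n (kap n) Hn Hk Heq).
    split; [exists (paper_partition n (kap n)); auto|split; auto].
Qed.
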